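(* In the two-user two-hop MAC described in the context, for every feasible $\mathbf B$ with $\mathbf B\mathbf h_1\neq0$ there exists a feasible $\mathbf B'$ such that $\mathbf B'\mathbf h_1$ is a nonzero vector in $\mathrm{span}\{\mathbf h_{01},\mathbf h_{02}\}$ and $\mathcal R^{out}_1(\mathbf B)\subseteq\mathcal R^{out}_1(\mathbf B')$. Consequently, to obtain the first outer bound $\bigcup_{\mathbf B}\mathcal R^{out}_1(\mathbf B)$ it suffices to take amplification vectors $\mathbf x=\mathbf B\mathbf h_1$ in $\mathrm{span}\{\mathbf h_{01},\mathbf h_{02}\}$.
   Context: Two sources $S_1,S_2$ with Gaussian inputs of powers $P_{S_1},P_{S_2}>0$, $n$ relays, one destination. Relay $k$ receives $y_k=h_{S_1,k}x_{S_1}+h_{S_2,k}x_{S_2}+z_k$ and sends $\beta_k y_k$; $\mathbf h_{0i}=(h_{S_i,k})_k$, $\mathbf h_1=(h_{k,D})_k$ have positive entries, $\mathbf B=\mathrm{diag}(\beta_1,\dots,\beta_n)$ with real gains, noises i.i.d. $\mathcal N(0,1)$. $\mathbf B$ is feasible if $|\beta_k|\le\beta_k^{Up}:=\sqrt{P_k^{Up}/(1+h_{S_1,k}^2P_{S_1}+h_{S_2,k}^2P_{S_2})}$ for all $k$. Let $\mathcal C(x)=\frac12\log_2(1+x)$, $\mathbf A=P_{S_1}\mathbf h_{01}\mathbf h_{01}^T+P_{S_2}\mathbf h_{02}\mathbf h_{02}^T$. For $\mathbf B\mathbf h_1\neq0$, $\mathcal R^{out}_1(\mathbf B)$ is the set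 of $(R_1,R_2)\ge0$ with $R_1\le\mathcal C\big((\mathbf h_1^T\mathbf B\mathbf h_{01})^2P_{S_1}/\mathbf h_1^T\mathbf B^2\mathbf h_1\big)$, $R_2\le\mathcal C\big((\mathbf h_1^T\mathbf B\mathbf h_{02})^2P_{S_2}/\mathbf h_1^T\mathbf B^2\mathbf h_1\big)$, $R_1+R_2\le\mathcal C\big(\mathbf h_1^T\mathbf B\mathbf A\mathbf B\mathbf h_1/\mathbf h_1^T\mathbf B^2\mathbf h_1\big)$. *)

(* Defs.v *)
From mathcomp Require Import all_boot all_order all_algebra.
From mathcomp Require Import all_classical all_reals all_analysis.
Set Implicit Arguments. Unset Strict Implicit. Unset Printing Implicit Defensive.
Import Order.TTheory GRing.Theory Num.Theory.
Local Open Scope ring_scope.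

Section TwoHop.
Variables (R : realType) (n : nat).

Definition Cfun (x : R) : R := ln (1 + x) / (2 * ln 2).

Definition Bmx (beta : 'cV[R]_n) : 'M[R]_n := diag_mx beta^T.

Definition sc (M : 'M[R]_1) : R := M 0 0.

Definition beta_up (PS1 PS2 : R) (Pup h01 h02 : 'cV[R]_n) (k : 'I_n) : R :=
  Num.sqrt (Pup k 0 / (1 + (h01 k 0)^+2 * PS1 + (h02 k 0)^+2 * PS2)).

Definition feasible (PS1 PS2 : R) (Pup h01 h02 : 'cV[R]_n) (beta : 'cV[R]_n) :=
  forall k : 'I_n, `|beta k 0| <= beta_up PS1 PS2 Pup h01 h02 k.

Definition Amx (PS1 PS2 : R) (h01 h02 : 'cV[R]_n) : 'M[R]_n :=
  PS1 *: (h01 *m h01^T) + PS2 *: (h02 *m h02^T).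

(* R^out_1(B), meaningful when B h1 <> 0 *)
Definition Rout1 (PS1 PS2 : R) (h01 h02 h1 : 'cV[R]_n) (beta : 'cV[R]_n)
  (R1 R2 : R) : Prop :=
  let B := Bmx beta in
  let den := sc (h1^T *m B *m B *m h1) in
  [/\ 0 <= R1, 0 <= R2,
      R1 <= Cfun ((sc (h1^T *m B *m h01))^+2 * PS1 / den),
      R2 <= Cfun ((sc (h1^T *m B *m h02))^+2 * PS2 / den) &
      R1 + R2 <= Cfun (sc (h1^T *m B *m Amx PS1 PS2 h01 h02 *m B *m h1) / den)].

Definition in_span2 (x h01 h02 : 'cV[R]_n) : Prop :=
  exists a b : R, x = a *: h01 + b *: h02.

End TwoHop.

(* Main.v *)
Require Import Defs.
From mathcomp Require Import all_boot all_order all_algebra.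
From mathcomp Require Import all_classical all_reals all_analysis.
From mathcomp Require Import ring lra.
Import Order.TTheory GRing.Theory Num.Theory.
Local Open Scope ring_scope.

Section S.
Variables (R : realType) (n : nat).
Implicit Types (u v w : 'cV[R]_n).

Definition dot u v : R := \sum_i u i 0 * v i 0.

Lemma dotC u v : dot u v = dot v u.
Proof. by apply: eq_bigr => i _; rewrite mulrC. Qed.
Lemma dotDl u v w : dot (u + v) w = dot u w + dot v w.
Proof. by rewrite /dot -big_split; apply: eq_bigr => i _; rewrite !mxE mulrDl. Qed.
Lemma dotBl u v w : dot (u - v) w = dot u w - dot v w.
Proof. by rewrite /dot -sumrB; apply: eq_bigr => i _; rewrite !mxE mulrBl. Qed.
Lemma dotZl a u v : dot (a *: u) v = a * dot u v.
Proof. by rewrite /dot mulr_sumr; apply: eq_bigr => i _; rewrite !mxE mulrA. Qed.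
Lemma dotDr u v w : dot w (u + v) = dot w u + dot w v.
Proof. by rewrite dotC dotDl !(dotC w). Qed.
Lemma dotBr u v w : dot w (u - v) = dot w u - dot w v.
Proof. by rewrite dotC dotBl !(dotC w). Qed.
Lemma dotZr a u v : dot v (a *: u) = a * dot v u.
Proof. by rewrite dotC dotZl dotC. Qed.
Lemma dot0l u : dot 0 u = 0.
Proof. by rewrite /dot big1 // => i _; rewrite mxE mul0r. Qed.
Lemma dot_ge0 u : 0 <= dot u u.
Proof. by apply: sumr_ge0 => i _; rewrite -expr2 sqr_ge0. Qed.
Lemma dot_eq0 u : dot u u = 0 -> u = 0.
Proof.
move=> /eqP; rewrite psumr_eq0 => [/allP H|i _]; last by rewrite -expr2 sqr_ge0.
apply/matrixP => i j; rewrite (ord1 j) mxE.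
by have := H i (mem_index_enum i); rewrite -expr2 sqrf_eq0 => /eqP.
Qed.
Lemma dot_gt0 u v (i0 : 'I_n) : (forall k, 0 < u k 0) -> (forall k, 0 < v k 0) -> 0 < dot u v.
Proof.
move=> hu hv; rewrite /dot (bigD1 i0) //=; apply: ltr_wpDr; last exact: mulr_gt0.
by apply: sumr_ge0 => i _; apply: mulr_ge0; apply: ltW.
Qed.

Lemma scT u v : sc (u^T *m v) = dot u v.
Proof. by rewrite /sc !mxE; apply: eq_bigr => i _; rewrite mxE. Qed.
Lemma sc11 (M N : 'M[R]_1) : sc (M *m N) = sc M * sc N.
Proof. by rewrite /sc mxE big_ord1. Qed.
Lemma hB (h1 : 'cV[R]_n) beta : h1^T *m Bmx beta = (Bmx beta *m h1)^T.
Proof. by rewrite trmx_mul /Bmx tr_diag_mx. Qed.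

Lemma scQ (x h : 'cV[R]_n) : sc (x^T *m (h *m h^T) *m x) = dot x h ^+ 2.
Proof. by rewrite !mulmxA -mulmxA sc11 !scT (dotC h x) expr2. Qed.

Lemma sc_add (M N : 'M[R]_1) : sc (M + N) = sc M + sc N.
Proof. by rewrite /sc mxE. Qed.
Lemma sc_scale a (M : 'M[R]_1) : sc (a *: M) = a * sc M.
Proof. by rewrite /sc mxE. Qed.

Lemma scA PS1 PS2 (x h01 h02 : 'cV[R]_n) :
  sc (x^T *m Amx PS1 PS2 h01 h02 *m x) = PS1 * dot x h01 ^+ 2 + PS2 * dot x h02 ^+ 2.
Proof.
have E a (M : 'M[R]_n) : x^T *m (a *: M) *m x = a *: (x^T *m M *m x).
  by rewrite -scalemxAr -scalemxAl.
by rewrite /Amx mulmxDr mulmxDl !E sc_add !sc_scale !scQ.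
Qed.

Definition RX PS1 PS2 (h01 h02 x : 'cV[R]_n) (R1 R2 : R) :=
  [/\ 0 <= R1, 0 <= R2,
      R1 <= Cfun (dot x h01 ^+ 2 * PS1 / dot x x),
      R2 <= Cfun (dot x h02 ^+ 2 * PS2 / dot x x) &
      R1 + R2 <= Cfun ((PS1 * dot x h01 ^+ 2 + PS2 * dot x h02 ^+ 2) / dot x x)].

Lemma Rout1E PS1 PS2 (h01 h02 h1 beta : 'cV[R]_n) R1 R2 :
  Rout1 PS1 PS2 h01 h02 h1 beta R1 R2 <-> RX PS1 PS2 h01 h02 (Bmx beta *m h1) R1 R2.
Proof.
rewrite /Rout1 /RX /=.
have E1 v : sc (h1^T *m Bmx beta *m v) = dot (Bmx beta *m h1) v by rewrite hB scT.
have E2 : sc (h1^T *m Bmx beta *m Bmx beta *m h1) = dot (Bmx beta *m h1) (Bmx beta *m h1)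
  by rewrite -mulmxA E1.
have E3 : sc (h1^T *m Bmx beta *m Amx PS1 PS2 h01 h02 *m Bmx beta *m h1) =
   PS1 * dot (Bmx beta *m h1) h01 ^+ 2 + PS2 * dot (Bmx beta *m h1) h02 ^+ 2.
  by rewrite -scA hB -!mulmxA.
by rewrite E2 E3 !E1; split.
Qed.


Lemma Cfun_le (a b : R) : 0 <= a -> a <= b -> Cfun a <= Cfun b.
Proof.
move=> a0 ab; rewrite /Cfun ler_wpM2r //.
  rewrite invr_ge0 mulr_ge0 // ltW // ln_gt0 //; lra.
rewrite ler_ln ?posrE; lra.
Qed.

Lemma RX_mono (PS1 PS2 : R) (h01 h02 x y : 'cV[R]_n) R1 R2 :
  0 < PS1 -> 0 < PS2 -> 0 < dot x x ->
  dot x h01 ^+ 2 / dot x x <= dot y h01 ^+ 2 / dot y y ->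
  dot x h02 ^+ 2 / dot x x <= dot y h02 ^+ 2 / dot y y ->
  RX PS1 PS2 h01 h02 x R1 R2 -> RX PS1 PS2 h01 h02 y R1 R2.
Proof.
move=> p1 p2 xx r1 r2 [a0 b0 c1 c2 c3].
have E (u P w : R) : u * P / w = P * (u / w) by rewrite mulrAC mulrC.
have F (u1 u2 w : R) : (PS1 * u1 + PS2 * u2) / w = PS1 * (u1 / w) + PS2 * (u2 / w).
  by rewrite mulrDl !mulrA.
have g1 : 0 <= dot x h01 ^+ 2 / dot x x by rewrite divr_ge0 ?sqr_ge0 ?ltW.
have g2 : 0 <= dot x h02 ^+ 2 / dot x x by rewrite divr_ge0 ?sqr_ge0 ?ltW.
split => //.
- apply: (le_trans c1); apply: Cfun_le; rewrite ?(E (dot x h01 ^+ 2)) ?(E (dot y h01 ^+ 2)).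
    by apply: mulr_ge0 => //; apply: ltW.
  by rewrite ler_pM2l.
- apply: (le_trans c2); apply: Cfun_le; rewrite ?(E (dot x h02 ^+ 2)) ?(E (dot y h02 ^+ 2)).
    by apply: mulr_ge0 => //; apply: ltW.
  by rewrite ler_pM2l.
- apply: (le_trans c3); apply: Cfun_le; rewrite ?(F (dot x h01 ^+ 2)) ?(F (dot y h01 ^+ 2)).
    by apply: addr_ge0; apply: mulr_ge0 => //; apply: ltW.
  by rewrite lerD // ler_pM2l.
Qed.

Lemma pyth (x y h01 h02 : 'cV[R]_n) a b :
  y = a *: h01 + b *: h02 -> dot y h01 = dot x h01 -> dot y h02 = dot x h02 ->
  dot y y <= dot x x.
Proof.
move=> Ey e1 e2.
have Hyy : dot y y = a * dot x h01 + b * dot x h02.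
  by rewrite {1}Ey dotDl !dotZl -e1 -e2 (dotC h01) (dotC h02).
have Hxy : dot x y = a * dot x h01 + b * dot x h02.
  by rewrite Ey dotDr !dotZr.
have := dot_ge0 (x - y); rewrite !(dotBl, dotBr) (dotC y x) Hxy Hyy; lra.
Qed.

Lemma gram (x h01 h02 : 'cV[R]_n) (i0 : 'I_n) :
  (forall k, 0 < h01 k 0) -> (forall k, 0 < h02 k 0) ->
  exists a b, dot (a *: h01 + b *: h02) h01 = dot x h01 /\
              dot (a *: h01 + b *: h02) h02 = dot x h02.
Proof.
move=> p1 p2.
have g11 := dot_gt0 _ _ i0 p1 p1; have g22 := dot_gt0 _ _ i0 p2 p2; have g12 := dot_gt0 _ _ i0 p1 p2.
set G11 := dot h01 h01 in g11 *; set G22 := dot h02 h02 in g22 *.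
set G12 := dot h01 h02 in g12 *.
have e21 : dot h02 h01 = G12 by rewrite dotC.
set c1 := dot x h01; set c2 := dot x h02.
have L a b : dot (a *: h01 + b *: h02) h01 = a * G11 + b * G12
  by rewrite dotDl !dotZl e21.
have L2 a b : dot (a *: h01 + b *: h02) h02 = a * G12 + b * G22
  by rewrite dotDl !dotZl.
have [D0|Dn] := eqVneq (G11 * G22 - G12 ^+ 2) 0.
- pose z := G22 *: h01 - G12 *: h02.
  have zz : dot z z = 0.
    rewrite /z !(dotBl, dotBr, dotZl, dotZr) e21 -/G11 -/G22 -/G12.
    have -> : G22 * (G22 * G11 - G12 * G12) - G12 * (G22 * G12 - G12 * G22)
       = G22 * (G11 * G22 - G12 ^+ 2) by ring.
    by rewrite D0 mulr0.
  have z0 := dot_eq0 _ zz.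
  have : dot z x = 0 by rewrite z0 dot0l.
  rewrite /z dotBl !dotZl (dotC h01) (dotC h02) -/c1 -/c2 => hz.
  exists (c1 / G11), 0; rewrite L L2 !mul0r !addr0; split.
    by rewrite divfK // gt_eqF.
  have g11n : G11 != 0 by rewrite gt_eqF.
  have g12n : G12 != 0 by rewrite gt_eqF.
  apply: (mulIf g11n); rewrite mulrAC divfK //.
  apply: (mulIf g12n).
  have h1 : G22 * c1 = G12 * c2 by lra.
  have h2 : G11 * G22 = G12 ^+ 2 by lra.
  transitivity (G11 * (G22 * c1)); first by rewrite -mulrA -expr2 -h2; ring.
  by rewrite h1; ring.
- exists ((G22 * c1 - G12 * c2) / (G11 * G22 - G12 ^+ 2)),
         ((G11 * c2 - G12 * c1) / (G11 * G22 - G12 ^+ 2)).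
  rewrite L L2; split; by field.
Qed.


Lemma proj (x h01 h02 : 'cV[R]_n) :
  (forall k, 0 < h01 k 0) -> (forall k, 0 < h02 k 0) -> x != 0 ->
  exists y, [/\ y != 0, (exists a b, y = a *: h01 + b *: h02),
     dot x h01 ^+ 2 / dot x x <= dot y h01 ^+ 2 / dot y y &
     dot x h02 ^+ 2 / dot x x <= dot y h02 ^+ 2 / dot y y].
Proof.
move=> p1 p2 hx.
have [i0 [j _]] := matrix0Pn _ hx.
have pos u : u != 0 -> 0 < dot u u.
  move=> hu; rewrite lt_def dot_ge0 andbT; apply/eqP => /dot_eq0 h.
  by rewrite h eqxx in hu.
have xx := pos _ hx.
have key : dot x h01 != 0 \/ dot x h02 != 0 -> exists y, [/\ y != 0, (exists a b, y = a *: h01 + b *: h02),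
     dot x h01 ^+ 2 / dot x x <= dot y h01 ^+ 2 / dot y y &
     dot x h02 ^+ 2 / dot x x <= dot y h02 ^+ 2 / dot y y].
  move=> hc.
  have [a [b [e1 e2]]] := gram x h01 h02 i0 p1 p2.
  set y := a *: h01 + b *: h02 in e1 e2.
  have yn : y != 0.
    apply/eqP => y0; rewrite y0 !dot0l in e1 e2.
    by case: hc; rewrite -?e1 -?e2 eqxx.
  have yx := pyth x y h01 h02 a b (erefl y) e1 e2.
  have yy := pos _ yn.
  exists y; split => //; first by exists a, b.
    rewrite -e1; apply: ler_wpM2l; first exact: sqr_ge0.
    by rewrite lef_pV2 ?posrE.
  rewrite -e2; apply: ler_wpM2l; first exact: sqr_ge0.
  by rewrite lef_pV2 ?posrE.
have [e1|n1] := eqVneq (dot x h01) 0; last by apply: key; left.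
have [e2|n2] := eqVneq (dot x h02) 0; last by apply: key; right.
have hn : h01 != 0 by apply/matrix0Pn; exists i0, 0; rewrite gt_eqF.
exists h01; split => //; first by exists 1, 0; rewrite scale1r scale0r addr0.
  by rewrite e1 expr2 !mul0r divr_ge0 ?sqr_ge0 ?dot_ge0.
by rewrite e2 expr2 !mul0r divr_ge0 ?sqr_ge0 ?dot_ge0.
Qed.


Lemma lemma2_aux (PS1 PS2 : R)
  (Pup h01 h02 h1 : 'cV[R]_n) :
  0 < PS1 -> 0 < PS2 ->
  (forall k, 0 < h01 k 0) -> (forall k, 0 < h02 k 0) -> (forall k, 0 < h1 k 0) ->
  (forall k, 0 < Pup k 0) ->
  (forall beta : 'cV[R]_n,
     feasible PS1 PS2 Pup h01 h02 beta -> Bmx beta *m h1 != 0 ->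
     exists beta' : 'cV[R]_n,
       [/\ feasible PS1 PS2 Pup h01 h02 beta',
           Bmx beta' *m h1 != 0,
           in_span2 (Bmx beta' *m h1) h01 h02 &
           forall R1 R2 : R, Rout1 PS1 PS2 h01 h02 h1 beta R1 R2 ->
                             Rout1 PS1 PS2 h01 h02 h1 beta' R1 R2])
  /\
  (forall R1 R2 : R,
     (exists beta, [/\ feasible PS1 PS2 Pup h01 h02 beta, Bmx beta *m h1 != 0 &
                       Rout1 PS1 PS2 h01 h02 h1 beta R1 R2]) <->
     (exists beta, [/\ feasible PS1 PS2 Pup h01 h02 beta, Bmx beta *m h1 != 0,
                       in_span2 (Bmx beta *m h1) h01 h02 &
                       Rout1 PS1 PS2 h01 h02 h1 beta R1 R2])).
Proof.
move=> p1 p2 q1 q2 q3 qP.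
have part1 : forall beta : 'cV[R]_n,
     feasible PS1 PS2 Pup h01 h02 beta -> Bmx beta *m h1 != 0 ->
     exists beta' : 'cV[R]_n,
       [/\ feasible PS1 PS2 Pup h01 h02 beta',
           Bmx beta' *m h1 != 0,
           in_span2 (Bmx beta' *m h1) h01 h02 &
           forall R1 R2 : R, Rout1 PS1 PS2 h01 h02 h1 beta R1 R2 ->
                             Rout1 PS1 PS2 h01 h02 h1 beta' R1 R2].
  move=> beta _ hx.
  set x := Bmx beta *m h1 in hx *.
  have [y [yn [a [b ey]] r1 r2]] := proj x h01 h02 q1 q2 hx.
  have xx : 0 < dot x x.
    rewrite lt_def dot_ge0 andbT; apply/eqP => /dot_eq0 h.
    by rewrite h eqxx in hx.
  have yy : 0 < dot y y.
    rewrite lt_def dot_ge0 andbT; apply/eqP => /dot_eq0 h.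
    by rewrite h eqxx in yn.
  pose bu k := beta_up PS1 PS2 Pup h01 h02 k.
  have bu_gt0 k : 0 < bu k.
    rewrite /bu /beta_up sqrtr_gt0 divr_gt0 //.
    have := sqr_ge0 (h01 k 0); have := sqr_ge0 (h02 k 0) => s2 s1.
    have := mulr_ge0 s1 (ltW p1); have := mulr_ge0 s2 (ltW p2); lra.
  pose s k := `|y k 0 / h1 k 0| / bu k.
  have s_ge0 k : 0 <= s k by rewrite divr_ge0 // ltW.
  pose S := \sum_k s k.
  have S_ge0 : 0 <= S by apply: sumr_ge0 => k _.
  have sS k : s k <= S.
    by rewrite /S (bigD1 k) //= lerDl sumr_ge0.
  have t_gt0 : 0 < (1 + S)^-1 by rewrite invr_gt0; lra.
  pose beta' : 'cV[R]_n := \col_k ((1 + S)^-1 * (y k 0 / h1 k 0)).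
  have eB : Bmx beta' *m h1 = (1 + S)^-1 *: y.
    apply/matrixP => i j; rewrite (ord1 j) /Bmx mul_diag_mx !mxE.
    by rewrite -[_ * _ * h1 i 0]mulrA divfK // gt_eqF.
  exists beta'; rewrite eB; split.
  - move=> k; rewrite mxE normrM (ger0_norm (ltW t_gt0)).
    have -> : `|y k 0 / h1 k 0| = bu k * s k by rewrite /s [bu k * _]mulrC divfK // gt_eqF.
    rewrite mulrCA [_^-1 * s k]mulrC -[X in _ <= X](mulr1 (bu k)) ler_pM2l //.
    rewrite ler_pdivrMr ?mul1r; have := sS k; lra.
  - by rewrite scaler_eq0 negb_or gt_eqF.
  - by exists ((1 + S)^-1 * a), ((1 + S)^-1 * b); rewrite ey scalerDr !scalerA.
  move=> R1 R2; rewrite !Rout1E eB -/x.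
  set t := (1 + S)^-1 in t_gt0 *.
  have E c : (t * c) ^+ 2 / (t * (t * dot y y)) = c ^+ 2 / dot y y.
    by field; rewrite !gt_eqF.
  apply: RX_mono => //; rewrite !dotZl dotZr E //.
split => //.
move=> R1 R2; split; last by case=> beta [f nz _ r]; exists beta.
case=> beta [f nz r]; have [beta' [f' nz' sp' H]] := part1 beta f nz.
by exists beta'; split => //; apply: H.
Qed.

End S.

Theorem lemma2 (R : realType) (n : nat) (PS1 PS2 : R)
  (Pup h01 h02 h1 : 'cV[R]_n) :
  0 < PS1 -> 0 < PS2 ->
  (forall k, 0 < h01 k 0) -> (forall k, 0 < h02 k 0) -> (forall k, 0 < h1 k 0) ->
  (forall k, 0 < Pup k 0) ->
  (forall beta : 'cV[R]_n,
     feasible PS1 PS2 Pup h01 h02 beta -> Bmx beta *m h1 != 0 ->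
     exists beta' : 'cV[R]_n,
       [/\ feasible PS1 PS2 Pup h01 h02 beta',
           Bmx beta' *m h1 != 0,
           in_span2 (Bmx beta' *m h1) h01 h02 &
           forall R1 R2 : R, Rout1 PS1 PS2 h01 h02 h1 beta R1 R2 ->
                             Rout1 PS1 PS2 h01 h02 h1 beta' R1 R2])
  /\
  (forall R1 R2 : R,
     (exists beta, [/\ feasible PS1 PS2 Pup h01 h02 beta, Bmx beta *m h1 != 0 &
                       Rout1 PS1 PS2 h01 h02 h1 beta R1 R2]) <->
     (exists beta, [/\ feasible PS1 PS2 Pup h01 h02 beta, Bmx beta *m h1 != 0,
                       in_span2 (Bmx beta *m h1) h01 h02 &
                       Rout1 PS1 PS2 h01 h02 h1 beta R1 R2])).
Proof. exact: lemma2_aux. Qed.
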